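(* Let $\mathcal H$ be a complex Hilbert space, let $\mathbf A=(A_1,\dots,A_m)$ be an $m$-tuple of bounded self-adjoint operators on $\mathcal H$, and let $k$ be a positive integer. If $\operatorname{cl}(\Lambda_{\hat k}(\mathbf A))\neq\emptyset$ for some integer $\hat k\ge(m+2)k$, then $\operatorname{cl}(\Lambda_k(\mathbf A))$ is star-shaped and contains the convex set $\operatorname{conv}\operatorname{cl}(\Lambda_{\hat k}(\mathbf A))$, and every element of $\operatorname{conv}\operatorname{cl}(\Lambda_{\hat k}(\mathbf A))$ is a star center of $\operatorname{cl}(\Lambda_k(\mathbf A))$.
   Context: For an $m$-tuple $\mathbf A=(A_1,\dots,A_m)$ of bounded self-adjoint operators on a complex Hilbert space $\mathcal H$ and a positive integer $k$, the joint rank-$k$ numerical range is $\Lambda_k(\mathbf A)=\{(a_1,\dots,a_m)\in\mathbb R^m:$ there is an orthogonal projection $P$ of rank $k$ on $\mathcal H$ with $PA_jP=a_jP$ for $j=1,\dots,m\}$. $\operatorname{cl}$ denotes closure in $\mathbb R^m$ and $\operatorname{conv}$ convex hull. A set $S\subseteq\mathbb R^m$ is star-shaped with star center $\mathbf c\in S$ if for every $\mathbf b\in S$ the line segment joining $\mathbf c$ and $\mathbf b$ lies in $S$. *)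

(* Defs.v *)
From HB Require Import structures.
From mathcomp Require Import all_boot all_order all_algebra.
From mathcomp Require Import all_classical all_reals all_analysis.
From mathcomp Require Import complex.
Import numFieldNormedType.Exports.
Set Implicit Arguments. Unset Strict Implicit. Unset Printing Implicit Defensive.
Import Order.TTheory GRing.Theory Num.Theory ComplexField.
Local Open Scope classical_set_scope.
Local Open Scope ring_scope.

Section Hilbert.
Variable R : realType.
Local Notation C := (R[i]).
Variable H : lmodType C.

Definition is_inner_product (ip : H -> H -> C) : Prop :=
  [/\ (forall (a : C) (x y z : H), ip (a *: x + y) z = a * ip x z + ip y z),
      (forall x y : H, ip y x = (ip x y)^*),
      (forall x : H, 0 <= ip x x) &
      (forall x : H, ip x x = 0 -> x = 0)].

Definition ipnorm (ip : H -> H -> C) (x : H) : R := Num.sqrt (complex.Re (ip x x)).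

Definition ip_complete (ip : H -> H -> C) : Prop :=
  forall u : nat -> H,
    (forall e : R, 0 < e -> exists N : nat, forall p q : nat, (N <= p)%N -> (N <= q)%N ->
        ipnorm ip (u p - u q) < e) ->
    exists l : H, forall e : R, 0 < e -> exists N : nat, forall n : nat, (N <= n)%N ->
        ipnorm ip (u n - l) < e.

Definition is_hilbert (ip : H -> H -> C) : Prop :=
  is_inner_product ip /\ ip_complete ip.

Definition is_linear_op (T : H -> H) : Prop :=
  forall (a : C) (x y : H), T (a *: x + y) = a *: T x + T y.

Definition is_bounded_op (ip : H -> H -> C) (T : H -> H) : Prop :=
  is_linear_op T /\ exists M : R, forall x : H, ipnorm ip (T x) <= M * ipnorm ip x.

Definition is_selfadjoint_op (ip : H -> H -> C) (T : H -> H) : Prop :=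
  is_bounded_op ip T /\ forall x y : H, ip (T x) y = ip x (T y).

Definition is_orth_proj_rank (ip : H -> H -> C) (k : nat) (P : H -> H) : Prop :=
  [/\ is_selfadjoint_op ip P,
      (forall x : H, P (P x) = P x) &
      exists e : 'I_k -> H,
        (forall c : 'I_k -> C, \sum_(i < k) c i *: e i = 0 -> forall i, c i = 0) /\
        (forall y : H, (exists x : H, P x = y) <->
                       (exists c : 'I_k -> C, y = \sum_(i < k) c i *: e i))].

Definition joint_rank_k_nr (ip : H -> H -> C) (m k : nat) (A : 'I_m -> H -> H)
  : set 'rV[R]_m :=
  [set a | exists P : H -> H, is_orth_proj_rank ip k P /\
     forall (j : 'I_m) (x : H), P (A j (P x)) = ((a ord0 j)%:C)%C *: P x].
End Hilbert.

Section Geometry.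
Variables (R : realType) (m : nat).

Definition conv_hull (S : set 'rV[R]_m) : set 'rV[R]_m :=
  [set x | exists (n : nat) (w : 'I_n -> R) (p : 'I_n -> 'rV[R]_m),
     [/\ (forall i, 0 <= w i), \sum_(i < n) w i = 1, (forall i, S (p i)) &
         x = \sum_(i < n) w i *: p i]].

Definition star_center (S : set 'rV[R]_m) (c : 'rV[R]_m) : Prop :=
  S c /\ forall b, S b -> forall t : R, 0 <= t <= 1 -> S ((1 - t) *: c + t *: b).

Definition star_shaped (S : set 'rV[R]_m) : Prop := exists c, star_center S c.
End Geometry.

(* Main.v *)
Require Import Defs.
From HB Require Import structures.
From mathcomp Require Import all_boot all_order all_algebra.
From mathcomp Require Import all_classical all_reals all_analysis.
From mathcomp Require Import complex.
From mathcomp Require Import zify.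
Import numFieldNormedType.Exports.
Set Implicit Arguments. Unset Strict Implicit. Unset Printing Implicit Defensive.
Import Order.TTheory GRing.Theory Num.Theory ComplexField.
Local Open Scope classical_set_scope.
Local Open Scope ring_scope.
Section IP.
Variable R : realType.
Local Notation C := (R[i]).
Variable H : lmodType C.
Variable ip : H -> H -> C.
Hypothesis hip : is_inner_product ip.

Lemma ipDZl a x y z : ip (a *: x + y) z = a * ip x z + ip y z.
Proof. by case: hip. Qed.
Lemma ipC x y : ip y x = (ip x y)^*%C.
Proof. by case: hip. Qed.
Lemma ip_ge0 x : 0 <= ip x x.
Proof. by case: hip. Qed.
Lemma ip_eq0 x : ip x x = 0 -> x = 0.
Proof. by move=> h; case: hip => _ _ _; apply. Qed.

Lemma ip0l z : ip 0 z = 0.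
Proof.
have h := ipDZl 1 (0:H) 0 z; move: h; rewrite scaler0 addr0 mul1r => h.
by apply: (@addrI _ (ip 0 z)); rewrite addr0 -h.
Qed.
Lemma ipDl x y z : ip (x + y) z = ip x z + ip y z.
Proof. by have h := ipDZl 1 x y z; move: h; rewrite scale1r mul1r. Qed.
Lemma ipZl a x z : ip (a *: x) z = a * ip x z.
Proof. by rewrite -(addr0 (a *: x)) ipDZl ip0l addr0. Qed.
Lemma ipNl x z : ip (- x) z = - ip x z.
Proof. by rewrite -scaleN1r ipZl mulN1r. Qed.
Lemma ipBl x y z : ip (x - y) z = ip x z - ip y z.
Proof. by rewrite ipDl ipNl. Qed.
Lemma ip_suml n (F : 'I_n -> H) z : ip (\sum_i F i) z = \sum_i ip (F i) z.
Proof. exact: (big_morph (fun x => ip x z) (fun x y => ipDl x y z) (ip0l z)). Qed.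

Lemma ip0r z : ip z 0 = 0.
Proof. by rewrite ipC ip0l conjc0. Qed.
Lemma ipDr x y z : ip z (x + y) = ip z x + ip z y.
Proof. by rewrite [ip z (x + y)]ipC ipDl rmorphD [ip z x]ipC [ip z y]ipC. Qed.
Lemma ipZr a x z : ip z (a *: x) = a^*%C * ip z x.
Proof. by rewrite [ip z (a *: x)]ipC ipZl rmorphM [ip z x]ipC. Qed.
Lemma ipNr x z : ip z (- x) = - ip z x.
Proof. by rewrite [ip z (- x)]ipC ipNl rmorphN [ip z x]ipC. Qed.
Lemma ipBr x y z : ip z (x - y) = ip z x - ip z y.
Proof. by rewrite ipDr ipNr. Qed.
Lemma ip_sumr n (F : 'I_n -> H) z : ip z (\sum_i F i) = \sum_i ip z (F i).
Proof. exact: (big_morph (fun x => ip z x) (fun x y => ipDr x y z) (ip0r z)). Qed.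

Lemma ipxx_real x : exists r : R, 0 <= r /\ ip x x = r%:C%C.
Proof.
move: (ip_ge0 x); case: (ip x x) => a b; rewrite lecE /= => /andP[/eqP hb ha].
by exists a; split => //; rewrite hb.
Qed.

Lemma sum_delta n (F : 'I_n -> C) j : \sum_i F i * (i == j)%:R = F j.
Proof.
rewrite (bigD1 j) //= eqxx mulr1 big1 ?addr0 // => i /negbTE ->.
by rewrite mulr0.
Qed.
Lemma sum_delta' n (F : 'I_n -> C) j : \sum_i F i * (j == i)%:R = F j.
Proof. by under eq_bigr => i _ do rewrite eq_sym; exact: sum_delta. Qed.

Definition orthonormal n (u : 'I_n -> H) := forall i j, ip (u i) (u j) = (i == j)%:R.
Definition span n (e : 'I_n -> H) (y : H) := exists c : 'I_n -> C, y = \sum_i c i *: e i.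
Definition indep n (e : 'I_n -> H) :=
  forall c : 'I_n -> C, \sum_i c i *: e i = 0 -> forall i, c i = 0.

Lemma coef_orth n (u : 'I_n -> H) c l : orthonormal u ->
  ip (\sum_i c i *: u i) (u l) = c l.
Proof.
move=> hu; rewrite ip_suml; under eq_bigr => i _ do rewrite ipZl hu.
exact: sum_delta.
Qed.

Lemma orth_indep n (u : 'I_n -> H) : orthonormal u -> indep u.
Proof. by move=> hu c hc i; rewrite -(coef_orth c i hu) hc ip0l. Qed.

Lemma span0 n (e : 'I_n -> H) : span e 0.
Proof. by exists (fun _ => 0); rewrite big1 // => i _; rewrite scale0r. Qed.
Lemma span_lin n (e : 'I_n -> H) a x y : span e x -> span e y -> span e (a *: x + y).
Proof.
move=> [c ->] [d ->]; exists (fun i => a * c i + d i).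
rewrite scaler_sumr -big_split /=; apply: eq_bigr => i _.
by rewrite scalerDl scalerA.
Qed.
Lemma span_sum n p (e : 'I_n -> H) (F : 'I_p -> H) :
  (forall j, span e (F j)) -> span e (\sum_j F j).
Proof.
move=> hF; elim/big_ind: _ => //; first exact: span0.
by move=> x y hx hy; rewrite -[x]scale1r; apply: span_lin.
Qed.
Lemma span_gen n (e : 'I_n -> H) i : span e (e i).
Proof.
exists (fun j => (j == i)%:R); rewrite (bigD1 i) //= eqxx scale1r big1 ?addr0 //.
by move=> j /negbTE ->; rewrite scale0r.
Qed.
Lemma span_trans n p (e : 'I_n -> H) (f : 'I_p -> H) y :
  (forall j, span e (f j)) -> span f y -> span e y.
Proof.
move=> hf [c ->]; apply: span_sum => j; rewrite -[_ *: _]addr0.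
by apply: span_lin => //; exact: span0.
Qed.

End IP.
Section GS.
Variable R : realType.
Local Notation C := (R[i]).
Variable H : lmodType C.
Variable ip : H -> H -> C.
Hypothesis hip : is_inner_product ip.

Lemma widen_lift n (i : 'I_n) : widen_ord (leqnSn n) i = lift ord_max i.
Proof. by apply: val_inj; rewrite /= /bump leqNgt ltn_ord. Qed.

Lemma sum_recr n (F : 'I_n.+1 -> H) :
  \sum_i F i = \sum_(i < n) F (lift ord_max i) + F ord_max.
Proof. by rewrite big_ord_recr; under eq_bigr do rewrite widen_lift. Qed.

Definition ext n (f : 'I_n -> C) (a : C) (i : 'I_n.+1) :=
  if unlift ord_max i is Some j then f j else a.
Lemma extE n (f : 'I_n -> C) a j : ext f a (lift ord_max j) = f j.
Proof. by rewrite /ext liftK. Qed.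
Lemma extM n (f : 'I_n -> C) a : ext f a ord_max = a.
Proof. by rewrite /ext unlift_none. Qed.

Lemma span_scale n (e : 'I_n -> H) a x : span e x -> span e (a *: x).
Proof. by move=> hx; rewrite -[_ *: _]addr0; apply: span_lin => //; exact: span0. Qed.

Lemma indep_lift n (h : 'I_n.+1 -> H) : indep h -> indep (fun i => h (lift ord_max i)).
Proof.
move=> hh c hc i; move: (hh (ext c 0)); rewrite sum_recr.
under eq_bigr do rewrite extE.
by rewrite extM scale0r addr0 hc => /(_ erefl (lift ord_max i)); rewrite extE.
Qed.

Lemma notspan_max n (h : 'I_n.+1 -> H) : indep h ->
  ~ span (fun i => h (lift ord_max i)) (h ord_max).
Proof.
move=> hh [c hc]; move: (hh (ext c (-1))); rewrite sum_recr.
under eq_bigr do rewrite extE.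
rewrite extM -hc scaleN1r subrr => /(_ erefl ord_max); rewrite extM => /eqP.
by rewrite oppr_eq0 oner_eq0.
Qed.

Lemma GS n (h : 'I_n -> H) : indep h ->
  exists u : 'I_n -> H, orthonormal ip u /\ forall l, span h (u l).
Proof.
elim: n h => [|n IH] h hh.
  by exists h; split => [[]|[]].
have [u' [hu' hs']] := IH _ (indep_lift hh).
pose v := h ord_max - \sum_j ip (h ord_max) (u' j) *: u' j.
have vorth l : ip v (u' l) = 0 by rewrite ipBl // coef_orth // subrr.
have vspan : span h v.
  rewrite /v addrC -scaleN1r; apply: span_lin; last exact: span_gen.
  apply: span_sum => j; apply: span_scale; apply: span_trans (hs' j) => i.
  exact: span_gen.
have vnz : v != 0.
  apply/eqP => hv0; apply: (notspan_max hh); move/eqP: hv0; rewrite subr_eq0 => /eqP ->.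
  by apply: span_sum => j; apply: span_scale; apply: hs'.
have [r [r0 hr]] := ipxx_real hip v.
have rpos : 0 < r.
  rewrite lt_def r0 andbT; apply/eqP => r_0; move/eqP: vnz; apply.
  by apply: (ip_eq0 hip); rewrite hr r_0.
pose s := Num.sqrt r.
have spos : 0 < s by rewrite sqrtr_gt0.
pose w := ((s^-1)%:C)%C *: v.
have ww : ip w w = 1.
  rewrite /w ipZl // ipZr // conjc_real hr -!rmorphM /=.
  have -> : s^-1 * (s^-1 * r) = 1.
    by rewrite -(sqr_sqrtr (ltW rpos)) -/s mulrA -expr2 exprVn mulVf // expf_neq0 // gt_eqF.
  by [].
have wu l : ip w (u' l) = 0 by rewrite /w ipZl // vorth mulr0.
have uw l : ip (u' l) w = 0 by rewrite (ipC hip) wu conjc0.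
pose u (i : 'I_n.+1) := if unlift ord_max i is Some j then u' j else w.
exists u; split.
  move=> i j; case: (unliftP ord_max i) => [i' ->|->]; case: (unliftP ord_max j) => [j' ->|->];
    rewrite /u ?liftK ?unlift_none.
  - by rewrite hu' (inj_eq (@lift_inj _ ord_max)).
  - by rewrite uw eq_sym (negbTE (neq_lift _ _)).
  - by rewrite wu (negbTE (neq_lift _ _)).
  - by rewrite ww eqxx.
move=> l; case: (unliftP ord_max l) => [l' ->|->]; rewrite /u ?liftK ?unlift_none.
  by apply: span_trans (hs' l') => i; exact: span_gen.
exact: span_scale.
Qed.
End GS.
Section Proj.
Variable R : realType.
Local Notation C := (R[i]).
Variable H : lmodType C.
Variable ip : H -> H -> C.
Hypothesis hip : is_inner_product ip.

Lemma lin0 (T : H -> H) : is_linear_op T -> T 0 = 0.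
Proof.
move=> hT; have h := hT 1 0 0; move: h; rewrite scaler0 addr0 scale1r => h.
by apply: (@addrI _ (T 0)); rewrite addr0 -h.
Qed.
Lemma linD (T : H -> H) x y : is_linear_op T -> T (x + y) = T x + T y.
Proof. by move=> hT; have h := hT 1 x y; move: h; rewrite !scale1r. Qed.
Lemma linZ (T : H -> H) a x : is_linear_op T -> T (a *: x) = a *: T x.
Proof. by move=> hT; have h := hT a x 0; move: h; rewrite !addr0 (lin0 hT) addr0. Qed.
Lemma lin_sum (T : H -> H) n (c : 'I_n -> C) (e : 'I_n -> H) : is_linear_op T ->
  T (\sum_i c i *: e i) = \sum_i c i *: T (e i).
Proof.
move=> hT; rewrite (big_morph T (fun x y => linD x y hT) (lin0 hT)).
by apply: eq_bigr => i _; rewrite linZ.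
Qed.

Definition Pr k (u : 'I_k -> H) (y : H) := \sum_i ip y (u i) *: u i.

Section PrProps.
Variables (k : nat) (u : 'I_k -> H).
Hypothesis hu : orthonormal ip u.

Lemma Pr_lin : is_linear_op (Pr u).
Proof.
move=> a x y; rewrite /Pr scaler_sumr -big_split /=; apply: eq_bigr => i _.
by rewrite ipDZl // scalerDl scalerA.
Qed.
Lemma Pr_span y : span u y -> Pr u y = y.
Proof.
move=> [c ->]; rewrite /Pr; apply: eq_bigr => i _; by rewrite coef_orth.
Qed.
Lemma Pr_in y : span u (Pr u y).
Proof. by exists (fun i => ip y (u i)). Qed.
Lemma Pr_idem y : Pr u (Pr u y) = Pr u y.
Proof. exact: Pr_span (Pr_in y). Qed.
Lemma Pr_sa x y : ip (Pr u x) y = ip x (Pr u y).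
Proof.
rewrite /Pr ip_suml // ip_sumr //; apply: eq_bigr => i _.
by rewrite ipZl // ipZr // -(ipC hip) mulrC.
Qed.
Lemma Pr_orth x l : ip (x - Pr u x) (u l) = 0.
Proof. by rewrite ipBl // /Pr coef_orth // subrr. Qed.
Lemma Pr_orth_span x y : span u y -> ip (x - Pr u x) y = 0.
Proof.
move=> [c ->]; rewrite ip_sumr // big1 // => i _.
by rewrite ipZr // Pr_orth mulr0.
Qed.

Lemma Pr_bound x : ipnorm ip (Pr u x) <= 1 * ipnorm ip x.
Proof.
rewrite mul1r /ipnorm.
set w := x - Pr u x.
have o1 : ip w (Pr u x) = 0 by exact: Pr_orth_span (Pr_in x).
have o2 : ip (Pr u x) w = 0 by rewrite (ipC hip) o1 conjc0.
have ex : Pr u x + w = x by rewrite /w addrC subrK.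
clearbody w.
have key : ip (Pr u x + w) (Pr u x + w) = ip (Pr u x) (Pr u x) + ip w w.
  rewrite !(ipDl hip) !(ipDr hip) o1 o2.
  by rewrite add0r addr0.
rewrite ex in key; rewrite key.
have [r1 [r10 ->]] := ipxx_real hip (Pr u x).
have [r2 [r20 ->]] := ipxx_real hip w.
rewrite -rmorphD /= ler_sqrt ?addr_ge0 //.
by rewrite lerDl.
Qed.
Lemma Pr_proj : is_orth_proj_rank ip k (Pr u).
Proof.
split.
- split; last exact: Pr_sa.
  by split; [exact: Pr_lin | exists 1 => x; exact: Pr_bound].
- exact: Pr_idem.
exists u; split; first exact: orth_indep hu.
move=> y; split.
  by move=> [x <-]; exact: Pr_in.
by move=> hy; exists y; exact: Pr_span.
Qed.
End PrProps.

Lemma Lam_of_on m (A : 'I_m -> H -> H) k (u : 'I_k -> H) (a : 'rV[R]_m) :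
  (forall j, is_linear_op (A j)) -> orthonormal ip u ->
  (forall j l i, ip (A j (u l)) (u i) = ((a ord0 j)%:C)%C * (l == i)%:R) ->
  joint_rank_k_nr ip k A a.
Proof.
move=> hA hu ha; exists (Pr u); split; first exact: Pr_proj.
move=> j x; rewrite {1}/Pr.
have e i : ip (A j (Pr u x)) (u i) = ((a ord0 j)%:C)%C * ip x (u i).
  rewrite /Pr lin_sum // ip_suml //.
  under eq_bigr => l _ do rewrite ipZl // ha mulrA [ip x (u l) * _]mulrC -mulrA.
  by rewrite -mulr_sumr sum_delta.
under eq_bigr => i _ do rewrite e -scalerA.
by rewrite -scaler_sumr.
Qed.

Lemma range_prop m (A : 'I_m -> H -> H) k (P : H -> H) (a : 'rV[R]_m) :
  is_orth_proj_rank ip k P ->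
  (forall j x, P (A j (P x)) = ((a ord0 j)%:C)%C *: P x) ->
  exists e : 'I_k -> H, indep e /\
    forall j x y, span e x -> span e y -> ip (A j x) y = ((a ord0 j)%:C)%C * ip x y.
Proof.
move=> [[hb hsa] hid [e [hind hiff]]] ha; exists e; split => // j x y hx hy.
have Px : P x = x by have [z <-] := (hiff x).2 hx; rewrite hid.
have Py : P y = y by have [z <-] := (hiff y).2 hy; rewrite hid.
by rewrite -{1}Px -{1}Py -hsa ha ipZl // Px.
Qed.

Lemma on_of_Lam m (A : 'I_m -> H -> H) k (a : 'rV[R]_m) :
  joint_rank_k_nr ip k A a ->
  exists u : 'I_k -> H, orthonormal ip u /\
    forall j x y, span u x -> span u y -> ip (A j x) y = ((a ord0 j)%:C)%C * ip x y.
Proof.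
move=> [P [hP ha]]; have [e [he hprop]] := range_prop hP ha.
have [u [hu hs]] := GS hip he.
exists u; split => // j x y hx hy; apply: hprop.
  exact: span_trans hs hx.
exact: span_trans hs hy.
Qed.
End Proj.
From mathcomp Require Import ring.
Section Key.
Variable R : realType.
Local Notation C := (R[i]).
Variable H : lmodType C.
Variable ip : H -> H -> C.
Hypothesis hip : is_inner_product ip.
Variables (m : nat) (A : 'I_m -> H -> H).
Hypothesis hA : forall j, is_selfadjoint_op ip (A j).

Lemma hlin j : is_linear_op (A j). Proof. by case: (hA j) => -[]. Qed.
Lemma hsym j x y : ip (A j x) y = ip x (A j y). Proof. by case: (hA j). Qed.

Lemma widen_ord_inj n p (h : (n <= p)%N) : injective (widen_ord h).
Proof. by move=> a b /(congr1 val) /= /val_inj. Qed.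

Lemma Lam_mono k K a : (k <= K)%N -> joint_rank_k_nr ip K A a -> joint_rank_k_nr ip k A a.
Proof.
move=> hk hK; have [u [hu hprop]] := on_of_Lam hip hK.
apply: (@Lam_of_on _ _ ip hip _ _ _ (fun l => u (widen_ord hk l))).
- exact: hlin.
- by move=> i j; rewrite hu (inj_eq (@widen_ord_inj _ _ hk)).
move=> j l i; rewrite hprop; try exact: span_gen.
by rewrite hu (inj_eq (@widen_ord_inj _ _ hk)).
Qed.

Lemma sqrtC_sq (t : R) : 0 <= t ->
  ((Num.sqrt t)%:C)%C * (((Num.sqrt t)%:C)%C)^*%C = (t%:C)%C.
Proof. by move=> t0; rewrite conjc_real -rmorphM /= -expr2 sqr_sqrtr. Qed.

Lemma sum_delta_l n (c : C) (F : 'I_n -> C) j :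
  \sum_i (c * (j == i)%:R) * F i = c * F j.
Proof.
rewrite (bigD1 j) //= eqxx mulr1 big1 ?addr0 // => i /negbTE.
by rewrite eq_sym => ->; rewrite mulr0 mul0r.
Qed.

Lemma key_lemma k K (b c : 'rV[R]_m) (t : R) : ((m + 2) * k <= K)%N ->
  joint_rank_k_nr ip k A b -> joint_rank_k_nr ip K A c -> 0 <= t <= 1 ->
  joint_rank_k_nr ip k A ((1 - t) *: c + t *: b).
Proof.
move=> hK hbL hcL /andP[t0 t1].
have [u [hu hb]] := on_of_Lam hip hbL.
have [w [hw hc]] := on_of_Lam hip hcL.
pose T := (option 'I_m * 'I_k)%type.
pose g (s : T) := match s.1 with None => u s.2 | Some j => A j (u s.2) end.
pose M : 'M[C]_(K, #|{: T}|) := \matrix_(i, s) ip (w i) (g (enum_val s)).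
have hr : (k <= \rank (kermx M))%N.
  rewrite mxrank_ker; have h1 := rank_leq_col M.
  have h2 : #|{: T}| = (m.+1 * k)%N by rewrite card_prod card_option !card_ord.
  lia.
pose B := row_base (kermx M).
have hBM : B *m M = 0 by apply/sub_kermxP; rewrite eq_row_base.
have hfree := row_base_free (kermx M).
pose h' (l : 'I_k) := \sum_i B (widen_ord hr l) i *: w i.
have hspan l : span w (h' l) by exists (fun i => B (widen_ord hr l) i).
have horth l s : ip (h' l) (g s) = 0.
  move: (congr1 (fun X : 'M[C]_(\rank (kermx M), #|{: T}|) => X (widen_ord hr l) (enum_rank s)) hBM) => /=.
  rewrite !mxE => <-; rewrite /h' ip_suml //; apply: eq_bigr => i _.
  by rewrite ipZl // !mxE enum_rankK.
have hind : indep h'.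
  move=> d hd i0.
  have e1 : \sum_i (\sum_l d l * B (widen_ord hr l) i) *: w i = 0.
    rewrite -[RHS]hd /h'; symmetry.
    under eq_bigr do rewrite scaler_sumr.
    rewrite exchange_big; apply: eq_bigr => i _; rewrite scaler_suml.
    by apply: eq_bigr => l _; rewrite scalerA.
  have e2 i : \sum_l d l * B (widen_ord hr l) i = 0 := orth_indep hip hw e1 i.
  pose v : 'rV[C]_(\rank (kermx M)) :=
    \row_r0 \sum_l d l * (widen_ord hr l == r0)%:R.
  have hv : v *m B = 0.
    apply/rowP => i; rewrite !mxE -[RHS](e2 i).
    under eq_bigr do rewrite mxE mulr_suml.
    rewrite exchange_big; apply: eq_bigr => l _.
    by rewrite sum_delta_l.
  have v0 : v = 0 by apply: (row_free_inj hfree); rewrite hv mul0mx.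
  move: (congr1 (fun X : 'rV[C]_(\rank (kermx M)) => X 0 (widen_ord hr i0)) v0) => /=; rewrite !mxE.
  under eq_bigr do rewrite (inj_eq (@widen_ord_inj _ _ hr)).
  by rewrite sum_delta.
have [u' [hu' hs']] := GS hip hind.
have hu'w l : span w (u' l) := span_trans (hspan) (hs' l).
have hu'g l s : ip (u' l) (g s) = 0.
  have [d ->] := hs' l; rewrite ip_suml // big1 // => i _.
  by rewrite ipZl // horth mulr0.
have o1 l i : ip (u' l) (u i) = 0 := hu'g l (None, i).
have o2 l i j : ip (u' l) (A j (u i)) = 0 := hu'g l (Some j, i).
have o1' l i : ip (u i) (u' l) = 0 by rewrite (ipC hip) o1 conjc0.
have o2' l i j : ip (A j (u i)) (u' l) = 0 by rewrite (ipC hip) o2 conjc0.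
have o3 l i j : ip (A j (u' l)) (u i) = 0 by rewrite hsym o2.
pose al := ((Num.sqrt t)%:C)%C.
pose be := ((Num.sqrt (1 - t))%:C)%C.
have haa : al * al^*%C = (t%:C)%C by exact: sqrtC_sq.
have hbb : be * be^*%C = ((1 - t)%:C)%C by apply: sqrtC_sq; rewrite subr_ge0.
pose x l := al *: u l + be *: u' l.
apply: (@Lam_of_on _ _ ip hip _ _ _ x).
- exact: hlin.
- move=> l i; rewrite /x !(ipDl hip) !(ipDr hip) !(ipZl hip) !(ipZr hip).
  rewrite hu hu' o1 o1' !mulr0 !addr0 add0r !mulrA haa hbb rmorphB rmorph1 /=.
  ring.
move=> j l i; rewrite /x (linD _ _ (hlin j)) !(linZ _ _ (hlin j)).
rewrite !(ipDl hip) !(ipDr hip) !(ipZl hip) !(ipZr hip).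
rewrite o2' o3 !mulr0 addr0 add0r !mulrA haa hbb.
rewrite (hb j (u l) (u i)); try exact: span_gen.
rewrite (hc j (u' l) (u' i)); try exact: hu'w.
rewrite hu hu'.
rewrite !mxE !rmorphD !rmorphM ?rmorphN ?rmorph1 /=.
ring.
Qed.
End Key.
Lemma closure_norm (R : realType) m (S : set 'rV[R]_m) x :
  closure S x <-> forall e : R, 0 < e -> exists y, S y /\ `|x - y| < e.
Proof.
split.
  move=> hx e e0; have [y [Sy By]] := hx _ (nbhsx_ballx x e e0).
  by exists y; split => //; move: By; rewrite -ball_normE /ball_ /=.
move=> h B /nbhs_ballP [e /= e0 hB]; have [y [Sy hy]] := h e e0.
exists y; split => //; apply: hB; rewrite -ball_normE /ball_ /=; exact: hy.
Qed.

Section Final.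
Variable R : realType.
Local Notation C := (R[i]).
Variable H : lmodType C.
Variable ip : H -> H -> C.
Hypothesis hip : is_inner_product ip.
Variables (m : nat) (A : 'I_m -> H -> H).
Hypothesis hA : forall j, is_selfadjoint_op ip (A j).
Variables (k K : nat).
Hypothesis hK : ((m + 2) * k <= K)%N.

Local Notation S := (joint_rank_k_nr ip k A).
Local Notation SK := (joint_rank_k_nr ip K A).

Lemma SK_S a : SK a -> S a.
Proof. by apply: Lam_mono => //; lia. Qed.

Lemma conv_alg n (s : R) (b : 'rV[R]_m) (w : 'I_n -> R) (p : 'I_n -> 'rV[R]_m) :
  S b -> (forall i, SK (p i)) -> 0 <= s -> (forall i, 0 <= w i) ->
  s + \sum_i w i = 1 -> S (s *: b + \sum_i w i *: p i).
Proof.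
elim: n s b w p => [|n IH] s b w p Sb Sp s0 w0 hsum.
  by move: hsum; rewrite !big_ord0 addr0 => ->; rewrite scale1r addr0.
move: hsum; rewrite !big_ord_recr /=.
set wm := w ord_max; set pm := p ord_max.
set T := s + \sum_(i < n) w (widen_ord (leqnSn n) i).
have T0 : 0 <= T by rewrite addr_ge0 //; apply: sumr_ge0 => i _; exact: w0.
rewrite addrA -/T => hT.
have hwm : wm = 1 - T by rewrite -hT addrAC subrr add0r.
have [Teq0|Tpos] := eqVneq T 0.
  have s00 : s = 0.
    apply/eqP; rewrite eq_le s0 andbT -Teq0 /T lerDl; apply: sumr_ge0 => i _; exact: w0.
  have ws0 : \sum_(i < n) w (widen_ord (leqnSn n) i) = 0 by move: Teq0; rewrite /T s00 add0r.
  rewrite s00 scale0r add0r big1 ?add0r.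
    by rewrite hwm Teq0 subr0 scale1r; apply: SK_S; apply: Sp.
  move=> i _; rewrite (psumr_eq0P _ ws0) ?scale0r // => l _; exact: w0.
pose q := (s / T) *: b + \sum_(i < n) (w (widen_ord (leqnSn n) i) / T) *: p (widen_ord (leqnSn n) i).
have Tp : 0 < T by rewrite lt_def Tpos T0.
have Sq : S q.
  apply: IH => //.
  - by rewrite divr_ge0 // ltW.
  - by move=> i; rewrite divr_ge0 // ltW.
  rewrite -mulr_suml -mulrDl divff //.
have T1 : T <= 1 by rewrite -hT lerDl w0.
have := key_lemma hip hA hK Sq (Sp ord_max) (t := T).
rewrite T0 T1 => /(_ erefl).
congr S.
rewrite hwm addrA addrC; congr (_ + _).
rewrite /q scalerDr scaler_sumr scalerA mulrC divfK //; congr (_ + _).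
by apply: eq_bigr => i _; rewrite scalerA mulrC divfK.
Qed.

Lemma star_main (c b : 'rV[R]_m) (t : R) :
  conv_hull (closure SK) c -> closure S b -> 0 <= t <= 1 ->
  closure S ((1 - t) *: c + t *: b).
Proof.
move=> [n [w [p [w0 w1 hp ->]]]] hb /andP[t0 t1].
apply/closure_norm => e e0.
have e20 : 0 < e / 2 by rewrite divr_gt0.
have [b' [Sb' hbb']] := (closure_norm _ _).1 hb _ e20.
have hpi : forall i, exists y, SK y /\ `|p i - y| < e / 2.
  by move=> i; exact: (closure_norm _ _).1 (hp i) _ e20.
have [p' hp'] := choice hpi.
exists (t *: b' + \sum_i ((1 - t) * w i) *: p' i); split.
  apply: conv_alg => //.
  - by move=> i; case: (hp' i).
  - by move=> i; rewrite mulr_ge0 // subr_ge0.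
  by rewrite -mulr_sumr w1 mulr1 addrC subrK.
have -> : (1 - t) *: \sum_i w i *: p i + t *: b - (t *: b' + \sum_i ((1 - t) * w i) *: p' i)
   = (1 - t) *: \sum_i w i *: (p i - p' i) + t *: (b - b').
  have E : \sum_i ((1 - t) * w i) *: p' i = (1 - t) *: \sum_i w i *: p' i.
    by rewrite scaler_sumr; apply: eq_bigr => i _; rewrite scalerA.
  rewrite E.
  have E2 : \sum_i w i *: (p i - p' i) = \sum_i w i *: p i - \sum_i w i *: p' i.
    by rewrite -sumrB; apply: eq_bigr => i _; rewrite scalerBr.
  rewrite E2 !scalerBr opprD [- (t *: b') + _]addrC addrACA.
  by [].
apply: (le_lt_trans (ler_normD _ _)).
rewrite !normrZ !ger0_norm ?subr_ge0 //.
have hs : `|\sum_i w i *: (p i - p' i)| <= e / 2.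
  apply: (le_trans (ler_norm_sum _ _ _)).
  apply: (@le_trans _ _ (\sum_i w i * (e / 2))); last by rewrite -mulr_suml w1 mul1r.
  apply: ler_sum => i _; rewrite normrZ ger0_norm //.
  by apply: ler_wpM2l => //; case: (hp' i) => _ /ltW.
apply: (@le_lt_trans _ _ ((1 - t) * (e / 2) + t * (e / 2))).
  apply: lerD; first by apply: ler_wpM2l => //; rewrite subr_ge0.
  by apply: ler_wpM2l => //; exact: ltW.
rewrite -mulrDl subrK mul1r.
by rewrite ltr_pdivrMr // ltr_pMr // ltr1n.
Qed.
End Final.
Unset Implicit Arguments.
Theorem corollary3p2 (R : realType) (H : lmodType R[i]) (ip : H -> H -> R[i])
  (m : nat) (A : 'I_m -> H -> H) (k khat : nat) :
  is_hilbert ip ->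
  (forall j : 'I_m, is_selfadjoint_op ip (A j)) ->
  (0 < k)%N ->
  ((m + 2) * k <= khat)%N ->
  closure (joint_rank_k_nr ip khat A) !=set0 ->
  [/\ star_shaped (closure (joint_rank_k_nr ip k A)),
      conv_hull (closure (joint_rank_k_nr ip khat A)) `<=` closure (joint_rank_k_nr ip k A) &
      forall c, conv_hull (closure (joint_rank_k_nr ip khat A)) c ->
        star_center (closure (joint_rank_k_nr ip k A)) c].
Proof.
move=> hH hA hk hK [p hp].
have hip : is_inner_product ip := hH.1.
have center : forall c, conv_hull (closure (joint_rank_k_nr ip khat A)) c ->
    star_center (closure (joint_rank_k_nr ip k A)) c.
  move=> c hc.
  have [y [Sy _]] := (closure_norm _ _).1 hp 1 ltr01.
  have Sy' : joint_rank_k_nr ip k A y := SK_S hip hA hK Sy.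
  split.
    have h0 : 0 <= (0:R) <= 1 by rewrite lexx /=; exact: ler01.
    move: (star_main hip hA hK hc (subset_closure Sy') h0).
    by rewrite subr0 scale1r scale0r addr0.
  move=> b hb t ht; move: (star_main hip hA hK hc hb ht) => hh. exact hh.
have pc : conv_hull (closure (joint_rank_k_nr ip khat A)) p.
  exists 1%N, (fun _ => 1), (fun _ => p); split.
  - by move=> _; exact: ler01.
  - by rewrite big_ord1.
  - by move=> _.
  - by rewrite big_ord1 scale1r.
split.
- by exists p; apply: center.
- by move=> c hc; case: (center c hc).
- exact: center.
Qed.
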